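(* Let $h$ be a positive integer and $m=100h-1$. Write $(x_0X)^m=\sum_{i=0}^{m}a_iX^i$ in $A[X;D]$, where $a_i\in A(100h-1)$. Then there is an index $i>\frac34(m+1)$ such that $a_i\notin B_1$ and $a_j\in B_1$ for all $j>i$.
   Context: Let $K$ be a field and $A$ the free associative (non-unital) $K$-algebra on free generators $x_0,x_1,x_2,\dots$, with $K$-basis of monomials; $A^1$ is $A$ with unity adjoined. For $n\ge1$, $A(n)$ is the $K$-span of monomials of length $n$, and $A(0)=K$. For a monomial $s=x_{i_1}\cdots x_{i_n}$ write $s[q]=x_{i_q}$. Let $D$ be the derivation of $A$ with $D(x_i)=x_{i+1}$, and $A[X;D]$ the differential polynomial ring ($Xa=aX+D(a)$). $Z_1$ is the set of elements $a\in A$ of one of the forms: (1) $a=\kappa s$, $\kappa\in K$, $s$ a monomial of length $99$ with $s[3^p]=s[3^q]$ for some $0\le p<q\le 1$ (i.e. $s[1]=s[3]$); (2) $a=\kappa(s_1+s_2)$, $\kappa\in K$, $s_1,s_2$ monomials of length $99$, with integers $l_1>l_2\ge0$ such that $s_1[1]=x_{l_1}$, $s_1[3]=x_{l_2}$, $s_2[1]=x_{l_2}$, $s_2[3]=x_{l_1}$, and $s_1,s_2$ agree at all other positions. $B_1=\sum_{m\ge0}A(100m)\,Z_1\,A^1$ (the $K$-span of products $uzv$ with $u\in A(100m)$, $m\ge0$, $z\in Z_1$, $v\in A^1$). *)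

(* Defs.v *)
From HB Require Import structures.
From mathcomp Require Import all_boot all_algebra.
Set Implicit Arguments. Unset Strict Implicit. Unset Printing Implicit Defensive.
Import GRing.Theory.
Local Open Scope ring_scope.

(* A monomial x_{i_1} ... x_{i_n} is the word [:: i_1; ...; i_n] (seq nat);
   the empty word is the unit of A^1.  An element of A^1 is represented by a
   formal finite sum (list of (coefficient, word) pairs); its actual value is
   the coefficient function [ev]. Two formal sums denote the same element iff
   their [ev] agree. Elements of A are those with coefficient 0 on the empty word. *)
Definition word := seq nat.
Definition fsum (K : Type) := seq (K * word).

Section FreeAlg.
Variable K : fieldType.

Definition ev (p : fsum K) (w : word) : K := \sum_(t <- p | t.2 == w) t.1.

Definition fmul (p q : fsum K) : fsum K :=
  [seq (a.1 * b.1, a.2 ++ b.2) | a <- p, b <- q].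

Definition fscale (c : K) (p : fsum K) : fsum K := [seq (c * a.1, a.2) | a <- p].

(* the derivation D with D(x_i) = x_{i+1}, on a monomial (Leibniz rule) *)
Definition Dword (w : word) : fsum K :=
  [seq (1, set_nth 0%N w q (nth 0%N w q).+1) | q <- iota 0 (size w)].

Definition Dsum (p : fsum K) : fsum K :=
  flatten [seq fscale a.1 (Dword a.2) | a <- p].

(* Elements of A[X;D]: coefficient lists, the i-th entry is the coefficient of X^i
   (written on the left: sum a_i X^i). Multiplication uses
   (a X^i)(b X^j) = sum_k C(i,k) a D^k(b) X^(i-k+j), i.e. X a = a X + D(a). *)
Definition omul (P Q : seq (fsum K)) : seq (fsum K) :=
  mkseq (fun n =>
    flatten [seq
      flatten [seq
        flatten [seq
          (if (i - k + j == n)%N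
           then fscale ('C(i, k))%:R (fmul (nth [::] P i) (iter k Dsum (nth [::] Q j)))
           else [::])
        | j <- iota 0 (size Q)]
      | k <- iota 0 i.+1]
    | i <- iota 0 (size P)]) (size P + size Q).

Definition x0X : seq (fsum K) := [:: [::]; [:: (1, [:: 0%N])]].

(* (x_0 X)^m for m >= 1 *)
Definition x0Xpow (m : nat) : seq (fsum K) := iter m.-1 (omul x0X) x0X.

Definition coefA (m i : nat) : fsum K := nth [::] (x0Xpow m) i.

Definition inA (n : nat) (u : fsum K) : Prop :=
  forall w, ev u w != 0 -> size w = n.

(* positions are 1-based in the paper: s[q] = nth 0 s (q-1) *)
Definition inZ1 (z : fsum K) : Prop :=
  (exists (kappa : K) (s : word),
      size s = 99%N /\ nth 0%N s 0 = nth 0%N s 2 /\ ev z =1 ev [:: (kappa, s)])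
  \/
  (exists (kappa : K) (s1 s2 : word) (l1 l2 : nat),
      size s1 = 99%N /\ size s2 = 99%N /\ (l2 < l1)%N /\
      nth 0%N s1 0 = l1 /\ nth 0%N s1 2 = l2 /\
      nth 0%N s2 0 = l2 /\ nth 0%N s2 2 = l1 /\
      (forall q, q <> 0%N -> q <> 2%N -> nth 0%N s1 q = nth 0%N s2 q) /\
      ev z =1 ev [:: (kappa, s1); (kappa, s2)]).

(* B_1 = sum_{m>=0} A(100m) Z_1 A^1 : finite sums of products u z v,
   u in A(100 m_k), z in Z_1, v in A^1 (scalars are absorbed into u). *)
Definition inB1 (a : fsum K) : Prop :=
  exists l : seq (nat * fsum K * fsum K * fsum K),
    (forall t, t \in l -> inA (100 * t.1.1.1) t.1.1.2 /\ inZ1 t.1.2) /\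
    ev a =1 ev (flatten [seq fmul (fmul t.1.1.2 t.1.2) t.2 | t <- l]).

End FreeAlg.

(* Main.v *)
From HB Require Import structures.
Require Import Defs.
From mathcomp Require Import all_boot all_algebra.
From mathcomp Require Import zify ring.
From Stdlib Require Import Classical.
Set Implicit Arguments. Unset Strict Implicit. Unset Printing Implicit Defensive.
Import GRing.Theory.
Local Open Scope ring_scope.

Section S.
Variable K : fieldType.

Lemma ev_sum (p : fsum K) w : ev p w = \sum_(t <- p) t.1 * (t.2 == w)%:R.
Proof. by rewrite /ev big_mkcond; apply: eq_bigr => t _; case: eqP; rewrite ?mulr1 ?mulr0. Qed.

Lemma ev_nil w : ev ([::] : fsum K) w = 0.
Proof. by rewrite /ev big_nil. Qed.

Lemma ev_cat (p q : fsum K) w : ev (p ++ q) w = ev p w + ev q w.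
Proof. by rewrite /ev big_cat. Qed.

Lemma ev_flatten (L : seq (fsum K)) w : ev (flatten L) w = \sum_(p <- L) ev p w.
Proof. by rewrite /ev big_flatten. Qed.

Lemma ev_fscale c (p : fsum K) w : ev (fscale c p) w = c * ev p w.
Proof. by rewrite /ev /fscale big_map mulr_sumr. Qed.

Definition x0 : fsum K := [:: (1, [:: 0%N])].

Lemma ev_x0mul (q : fsum K) w :
  ev (fmul x0 q) w = if w is (0%N :: w') then ev q w' else 0.
Proof.
rewrite /ev /fmul /x0 /= cats0 big_map.
case: w => [|[|a] w'] /=.
- by rewrite big_pred0 // => t.
- by apply: eq_big => [t|t _] //=; rewrite mul1r.
- by rewrite big_pred0 // => t.
Qed.

Fixpoint decs (w : word) : seq word :=
  match w with
  | [::] => [::]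
  | a :: w' => (if (0 < a)%N then [:: a.-1 :: w'] else [::]) ++ map (cons a) (decs w')
  end.

Lemma decs_size w v : v \in decs w -> size v = size w.
Proof.
elim: w v => [|a w IH] v //=; rewrite mem_cat => /orP[].
  by case: (0 < a)%N; rewrite ?inE // => /eqP ->.
by case/mapP => v' /IH <- ->.
Qed.

Lemma decs_sumn w v : v \in decs w -> (sumn v).+1 = sumn w.
Proof.
elim: w v => [|a w IH] v //=; rewrite mem_cat => /orP[].
  by case: a => [|a] //=; rewrite inE => /eqP ->.
by case/mapP => v' /IH <- -> /=; rewrite addnS.
Qed.

Lemma Dword_cons a u :
  Dword K (a :: u) = (1, a.+1 :: u) :: [seq (t.1, a :: t.2) | t <- Dword K u].
Proof.
rewrite /Dword /= -map_comp; congr (_ :: _).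
rewrite -(addn0 1%N) iotaDl -map_comp; apply: eq_map => q /=.
by [].
Qed.

Lemma ev_Dword u w :
  ev (Dword K u) w = \sum_(v <- decs w) ((u == v)%:R : K).
Proof.
elim: w u => [|b w IH] [|a u].
- by rewrite /Dword /ev /= !big_nil.
- rewrite [decs _]/= big_nil Dword_cons ev_sum big_cons big_map big1 => [|t _];
    by rewrite /= ?mulr0 ?addr0.
- rewrite ev_sum /Dword /= big_nil big1_seq // => v /andP[_ Hv]; move: (@decs_size (b :: w) v Hv).
  by case: v Hv.
- rewrite Dword_cons ev_sum big_cons.
  have -> : \sum_(t <- [seq (t.1, a :: t.2) | t <- Dword K u])
               t.1 * ((t.2 == b :: w)%:R : K) =
            (a == b)%:R * ev (Dword K u) w.
    rewrite big_map ev_sum mulr_sumr; apply: eq_bigr => t _.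
    rewrite eqseq_cons; case: eqP => _ /=; rewrite ?mul1r ?mul0r ?mulr0 //.
  rewrite [decs _]/= big_cat big_map /= IH mulr_sumr.
  have -> : \sum_(i <- decs w) ((a :: u == b :: i)%:R : K) =
            \sum_(i <- decs w) (a == b)%:R * (u == i)%:R.
    by apply: eq_bigr => v _; rewrite eqseq_cons; case: eqP; case: eqP;
       rewrite ?mul1r ?mul0r.
  congr (_ + _).
  rewrite eqseq_cons mul1r.
  case: b {IH} => [|b] /=; first by rewrite big_nil.
  by rewrite big_cons big_nil addr0 eqseq_cons eqSS.
Qed.

Lemma ev_Dsum (q : fsum K) w :
  ev (Dsum q) w = \sum_(v <- decs w) ev q v.
Proof.
rewrite /Dsum ev_flatten big_map.
under eq_bigr do rewrite ev_fscale ev_Dword mulr_sumr.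
rewrite exchange_big /=; apply: eq_bigr => v _.
by rewrite ev_sum.
Qed.


Lemma ev_if (b : bool) (p : fsum K) w :
  ev (if b then p else [::]) w = if b then ev p w else 0.
Proof. by case: b; rewrite ?ev_nil. Qed.

Lemma sum_iota_if s c (f : nat -> K) :
  \sum_(j <- iota 0 s) (if j == c then f j else 0) = if (c < s)%N then f c else 0.
Proof.
rewrite -big_mkcond.
have -> : iota 0 s = index_iota 0 s by rewrite /index_iota subn0.
by rewrite big_nat1_eq.
Qed.

Lemma ev_x0mul_nil w : ev (fmul x0 ([::] : fsum K)) w = 0.
Proof. by rewrite ev_x0mul; case: w => [|[|a] w]; rewrite ?ev_nil. Qed.

Lemma omulE (Q : seq (fsum K)) n w :
  ev (nth [::] (omul (x0X K) Q) n) w =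
  (if n is n'.+1 then ev (fmul x0 (nth [::] Q n')) w else 0)
  + ev (fmul x0 (Dsum (nth [::] Q n))) w.
Proof.
rewrite /omul.
case: (ltnP n (size (x0X K) + size Q)) => Hn; last first.
  rewrite nth_default ?size_mkseq // ev_nil.
  rewrite (nth_default [::] (_ : size Q <= n)%N); last by move: Hn => /=; lia.
  case: n Hn => [|n] Hn; first by move: Hn => /=; lia.
  rewrite (nth_default [::] (_ : size Q <= n)%N); last by move: Hn => /=; lia.
  by rewrite /fmul /Dsum /= /ev !big_nil addr0.
rewrite nth_mkseq // [in LHS]ev_flatten [in LHS]big_map.
have -> : iota 0 (size (x0X K)) = [:: 0; 1]%N by [].
rewrite [in LHS]big_cons [in LHS]big_cons big_nil addr0.
rewrite [X in X + _ = _]ev_flatten big_map big1 ?add0r; last first.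
  move=> k _; rewrite ev_flatten big_map big1 // => j _.
  by rewrite ev_if; case: ifP => _ //; rewrite ev_fscale ev_nil mulr0.
rewrite [in LHS]ev_flatten [in LHS]big_map.
have -> : iota 0 2 = [:: 0; 1]%N by [].
rewrite [in LHS]big_cons [in LHS]big_cons big_nil addr0.
rewrite [X in X + _ = _]ev_flatten [X in _ + X = _]ev_flatten.
rewrite [X in X + _ = _]big_map [X in _ + X = _]big_map.
under eq_bigr do rewrite ev_if ev_fscale.
under [X in _ + X = _]eq_bigr do rewrite ev_if ev_fscale.
rewrite subn0 subnn /=.
under eq_bigr do rewrite bin0 mul1r add1n.
under [X in _ + X = _]eq_bigr do rewrite bin1 mul1r add0n.
rewrite -/x0.
congr (_ + _).
  case: n {Hn} => [|n].
    by rewrite big1.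
  under eq_bigr do rewrite eqSS.
  rewrite sum_iota_if; case: ltnP => // Hn.
  by rewrite nth_default // ev_x0mul_nil.
rewrite sum_iota_if; case: ltnP => // Hn'.
by rewrite nth_default // /Dsum /= ev_x0mul_nil.
Qed.


Fixpoint G (z : nat) (w : word) : nat :=
  match w with
  | [::] => 1%N
  | a :: w' => ('C(z, a) * G (z.+1 - a) w')%N
  end.

Lemma G_decs z w : G z.+1 w = (G z w + \sum_(v <- decs w) G z v)%N.
Proof.
elim: w z => [|a w IH] z /=; first by rewrite big_nil addn0.
rewrite big_cat /= big_map.
case: a => [|a] /=.
  rewrite big_nil add0n !bin0 !mul1n !subn0.
  under eq_bigr do rewrite mul1n.
  exact: IH.
rewrite big_cons big_nil addn0 binS !subSS /=.
rewrite -big_distrr /=.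
case: (ltnP a z) => Ha.
  rewrite (_ : (z.+1 - a = (z - a).+1)%N); last by lia.
  rewrite IH; ring.
rewrite (bin_small (_ : z < a.+1)%N); last by lia.
by rewrite !mul0n !add0n addn0.
Qed.

Lemma G_big z w : (z + size w < sumn w)%N -> G z w = 0%N.
Proof.
elim: w z => [|a w IH] z //= H.
case: (ltnP z a) => Ha; first by rewrite bin_small.
by rewrite IH ?muln0 //; lia.
Qed.

Lemma x0XpowS m : (0 < m)%N -> x0Xpow K m.+1 = omul (x0X K) (x0Xpow K m).
Proof. by case: m. Qed.


Lemma coefG m : (0 < m)%N -> forall n w,
  ev (coefA K m n) w =
  ((size w == m) && (n + sumn w == m)%N)%:R * (G 0 w)%:R.
Proof.
elim: m => [//|m IH] _ n w.
case: m IH => [|m] IH.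
  rewrite /coefA /x0Xpow /=.
  case: n => [|[|n]].
  - rewrite ev_nil.
    case: w => [|[|a] [|b w]] //=; rewrite ?mul0r ?mulr0 //.
  - rewrite /ev big_cons big_nil /=.
    case: w => [|[|a] [|b w]] //=; rewrite ?mul0r ?mulr0 ?addr0 ?mul1r //.
  - rewrite nth_default // ev_nil.
    rewrite (_ : (n.+2 + sumn w == 1)%N = false) ?andbF ?mul0r //.
rewrite /coefA x0XpowS // omulE.
have IH' := IH isT.
case: w => [|[|a] w].
- by case: n => [|n]; rewrite !ev_x0mul /= ?add0r ?addr0 ?mul0r.
- rewrite [X in _ + X]ev_x0mul ev_Dsum.
  have Hs : \sum_(v <- decs w) ev (nth [::] (x0Xpow K m.+1) n) v =
   ((size w == m.+1) && (n + sumn w == m.+2)%N)%:R * \sum_(v <- decs w) (G 0 v)%:R.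
    rewrite mulr_sumr; apply: eq_big_seq => v Hv.
    rewrite IH' (decs_size Hv) -(decs_sumn Hv) addnS eqSS //.
  rewrite Hs {Hs} /= bin0 mul1n G_decs natrD -natr_sum.
  have [/andP[Hsz Hsum]|Hc] := boolP ((size w == m.+1) && (n + sumn w == m.+2)%N).
    case: n Hsum => [|n] Hsum.
      rewrite (G_big (_ : 0 + size w < sumn w)%N); first by rewrite /= add0r !mul1r add0r.
      by move: Hsz Hsum => /eqP -> /eqP; rewrite add0n => ->.
    rewrite ev_x0mul IH' /=.
    rewrite Hsz /=.
    move: Hsum; rewrite addSn eqSS => -> /=.
    by rewrite !mul1r.
  rewrite !mul0r addr0.
  case: n Hc => [//|n] Hc.
  rewrite ev_x0mul IH'; move: Hc; rewrite addSn eqSS => /negbTE -> /=.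
  by rewrite mul0r.
- by case: n => [|n]; rewrite !ev_x0mul /= ?add0r ?addr0 ?mulr0.
Qed.

End S.


Definition blk99 (e : nat) (b : bool) : word :=
  (if b then [:: 1; e; 0] else [:: 0; e; 1])%N ++ nseq 96 0%N.

Fixpoint Wj (e : nat) (bs : seq bool) : word :=
  match bs with
  | [::] => [::]
  | b :: bs' => blk99 e b ++ (if bs' is [::] then [::] else 0%N :: Wj e bs')
  end.

Fixpoint allbs (n : nat) : seq (seq bool) :=
  if n is n'.+1 then map (cons false) (allbs n') ++ map (cons true) (allbs n')
  else [:: [::]].

Fixpoint flip (t : nat) (bs : seq bool) : seq bool :=
  match bs with
  | [::] => [::]
  | b :: bs' => if t is t'.+1 then b :: flip t' bs' else ~~ b :: bs'
  end.

Fixpoint swapat (p : nat) (s : word) : word :=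
  match p, s with
  | 0%N, a :: b :: c :: s' => c :: b :: a :: s'
  | 0%N, _ => s
  | p'.+1, a :: s' => a :: swapat p' s'
  | p'.+1, [::] => [::]
  end.

Lemma mem_allbs n bs : (bs \in allbs n) = (size bs == n).
Proof.
elim: n bs => [|n IH] [|b bs] //=.
  by rewrite mem_cat; apply/negP => /orP[] /mapP [].
rewrite mem_cat eqSS; apply/idP/idP.
  by case/orP => /mapP [bs' H [_ ->]]; rewrite -IH.
move=> H; apply/orP; case: b; [right|left]; apply/mapP; exists bs => //;
  by rewrite IH.
Qed.

Lemma uniq_allbs n : uniq (allbs n).
Proof.
elim: n => [|n IH] //=.
rewrite cat_uniq !map_inj_uniq //; try by move=> x y [].
rewrite IH /= andbT; apply/hasPn => x /mapP [y _ ->].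
by apply/mapP => [[z _ []]].
Qed.

Lemma size_flip t bs : size (flip t bs) = size bs.
Proof. by elim: bs t => [|b bs IH] [|t] //=; rewrite IH. Qed.

Lemma flipK t bs : flip t (flip t bs) = bs.
Proof. by elim: bs t => [|b bs IH] [|t] //=; rewrite ?negbK ?IH. Qed.

Lemma perm_flip t n : perm_eq (map (flip t) (allbs n)) (allbs n).
Proof.
apply: uniq_perm; rewrite ?uniq_allbs //.
  by rewrite map_inj_uniq ?uniq_allbs //; apply: (can_inj (flipK t)).
move=> bs; apply/mapP/idP.
  by case=> bs' H ->; rewrite mem_allbs size_flip -mem_allbs.
by move=> H; exists (flip t bs); rewrite ?flipK // mem_allbs size_flip -mem_allbs.
Qed.

Lemma swapatK p s : swapat p (swapat p s) = s.
Proof.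
elim: p s => [|p IH] [|a [|b [|c s]]] //=; by rewrite ?IH.
Qed.

Lemma size_swapat p s : size (swapat p s) = size s.
Proof. by elim: p s => [|p IH] [|a [|b [|c s]]] //=; rewrite ?IH. Qed.

Lemma swapat_cat u p v : swapat (size u + p) (u ++ v) = u ++ swapat p v.
Proof. by elim: u => [|a u IH] //=; rewrite IH. Qed.

Lemma swapat0_cat (s v : word) : (3 <= size s)%N -> swapat 0 (s ++ v) = swapat 0 s ++ v.
Proof. by case: s => [|a [|b [|c s]]]. Qed.

Lemma size_blk99 e b : size (blk99 e b) = 99%N.
Proof. by case: b. Qed.

Lemma Wj_cons e b bs :
  Wj e (b :: bs) = blk99 e b ++ (if bs is [::] then [::] else 0%N :: Wj e bs).
Proof. by []. Qed.

Lemma Wj_flip e t bs : (t < size bs)%N -> Wj e (flip t bs) = swapat (100 * t) (Wj e bs).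
Proof.
elim: bs t => [|b bs IH] t Ht; first by [].
case: t Ht => [|t] Ht.
  have -> : flip 0 (b :: bs) = ~~ b :: bs by [].
  rewrite !Wj_cons muln0 swapat0_cat ?size_blk99 //.
  by clear Ht IH; case: b.
have -> : flip t.+1 (b :: bs) = b :: flip t bs by [].
case: bs IH Ht => [|b' bs] IH Ht; first by [].
set bs1 := b' :: bs.
rewrite !Wj_cons.
have -> : (if flip t bs1 is [::] then [::] else 0%N :: Wj e (flip t bs1)) =
          0%N :: Wj e (flip t bs1) by rewrite /bs1; case: t {IH Ht}.
rewrite IH //.
have -> : (100 * t.+1 = size (blk99 e b) + (100 * t).+1)%N by rewrite size_blk99; lia.
by rewrite swapat_cat.
Qed.

Lemma size_Wj e bs : size (Wj e bs) = (100 * size bs).-1.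
Proof.
elim: bs => [|b bs IH] //=.
rewrite size_cat size_blk99; case: bs IH => [|b' bs] //= ->; lia.
Qed.

Lemma Wj_nth e bs t : (t < size bs)%N ->
  nth 0%N (Wj e bs) (100 * t) != nth 0%N (Wj e bs) (100 * t + 2).
Proof.
elim: bs t => [|b bs IH] [|t] //= Ht.
  by case: b.
case: bs IH Ht => [|b' bs] IH Ht //=.
rewrite !nth_cat size_blk99.
rewrite (_ : (100 * t.+1 < 99 = false)%N); last by lia.
rewrite (_ : (100 * t.+1 + 2 < 99 = false)%N); last by lia.
rewrite (_ : (100 * t.+1 - 99 = (100 * t).+1)%N); last by lia.
rewrite (_ : (100 * t.+1 + 2 - 99 = (100 * t + 2).+1)%N); last by lia.
exact: IH.
Qed.


Section F.
Variable K : fieldType.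
Variables (e h : nat).

Definition sgn (bs : seq bool) : K := \prod_(b <- bs) (if b then -1 else 1).
Definition chi (w : word) : K := \sum_(bs <- allbs h) sgn bs * (Wj e bs == w)%:R.
Definition phi (p : fsum K) : K := \sum_(bs <- allbs h) sgn bs * ev p (Wj e bs).

Lemma sgn_flip t bs : (t < size bs)%N -> sgn (flip t bs) = - sgn bs.
Proof.
elim: bs t => [|b bs IH] [|t] //= Ht.
  by rewrite /sgn !big_cons; case: b => /=; rewrite ?mulN1r ?mul1r ?opprK.
by rewrite /sgn !big_cons -/(sgn _) IH // mulrN.
Qed.

Lemma phi_sum p : phi p = \sum_(t <- p) t.1 * chi t.2.
Proof.
rewrite /phi /chi; under eq_bigr do rewrite ev_sum mulr_sumr.
rewrite exchange_big /=; apply: eq_bigr => t _.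
rewrite mulr_sumr; apply: eq_bigr => bs _.
by rewrite mulrCA eq_sym.
Qed.

Lemma phi_ev p q : ev p =1 ev q -> phi p = phi q.
Proof. by move=> H; rewrite /phi; apply: eq_bigr => bs _; rewrite H. Qed.

Lemma phi_flatten L : phi (flatten L) = \sum_(p <- L) phi p.
Proof.
rewrite phi_sum big_flatten /=; apply: eq_bigr => p _; by rewrite phi_sum.
Qed.

Lemma chi_swap n' w : (n' < h)%N -> chi (swapat (100 * n') w) = - chi w.
Proof.
move=> Hn; rewrite /chi -(perm_big _ (perm_flip n' h)) big_map -sumrN.
apply: eq_big_seq => bs; rewrite mem_allbs => /eqP Hs.
rewrite sgn_flip ?Hs // Wj_flip ?Hs // (can_eq (swapatK _)) mulNr //.
Qed.

Lemma chi_nosize w : size w != (100 * h).-1 -> chi w = 0.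
Proof.
move=> Hw; rewrite /chi big1_seq // => bs /andP[_]; rewrite mem_allbs => /eqP Hs.
case: eqP => [E|_]; last by rewrite mulr0.
by move: Hw; rewrite -E size_Wj Hs eqxx.
Qed.

Lemma chi_type1 x s y n' : size x = (100 * n')%N -> size s = 99%N ->
  nth 0%N s 0 = nth 0%N s 2 -> chi (x ++ s ++ y) = 0.
Proof.
move=> Hx Hs Hq; rewrite /chi big1_seq // => bs /andP[_]; rewrite mem_allbs => /eqP Hb.
case: eqP => [E|_]; last by rewrite mulr0.
have Hsz : size (Wj e bs) = size (x ++ s ++ y) by rewrite E.
rewrite size_Wj !size_cat Hb Hx Hs in Hsz.
have Hn : (n' < size bs)%N by rewrite Hb; lia.
have := Wj_nth e Hn; rewrite E !nth_cat Hx ltnn subnn.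
rewrite (_ : (100 * n' + 2 < 100 * n' = false)%N); last by lia.
rewrite (_ : (100 * n' + 2 - 100 * n' = 2)%N); last by lia.
by rewrite Hs /= Hq eqxx.
Qed.

Lemma swap_s1s2 (s1 s2 : word) : size s1 = 99%N -> size s2 = 99%N ->
  nth 0%N s1 0 = nth 0%N s2 2 -> nth 0%N s1 2 = nth 0%N s2 0 ->
  (forall q, q <> 0%N -> q <> 2%N -> nth 0%N s1 q = nth 0%N s2 q) ->
  s2 = swapat 0 s1.
Proof.
case: s1 => [|a [|b [|c r1]]] //; case: s2 => [|a' [|b' [|c' r2]]] //= H1 H2.
move=> E0 E2 Eq.
apply: (@eq_from_nth _ 0%N); first by rewrite /= H1 H2.
move=> [|[|[|i]]] Hi /=; rewrite ?E0 ?E2 //.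
  by have := Eq 1%N; move=> /(_ ltac:(discriminate) ltac:(discriminate)) /= ->.
by have := Eq i.+3; move=> /(_ ltac:(discriminate) ltac:(discriminate)) /= ->.
Qed.

Lemma chi_type2 x s1 s2 y n' : size x = (100 * n')%N -> size s1 = 99%N ->
  s2 = swapat 0 s1 -> chi (x ++ s1 ++ y) + chi (x ++ s2 ++ y) = 0.
Proof.
move=> Hx Hs ->.
have -> : x ++ swapat 0 s1 ++ y = swapat (100 * n') (x ++ s1 ++ y).
  by rewrite -Hx -(addn0 (size x)) swapat_cat swapat0_cat ?Hs.
case: (ltnP n' h) => Hn.
  by rewrite chi_swap // addrN.
rewrite !chi_nosize ?addr0 //; rewrite ?size_swapat !size_cat Hx Hs; apply/eqP; lia.
Qed.

Lemma sum_ev (p : fsum K) (H : word -> K) L : uniq L ->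
  {subset map snd p <= L} ->
  \sum_(t <- p) t.1 * H t.2 = \sum_(w <- L) ev p w * H w.
Proof.
move=> uL sub.
under [RHS]eq_bigr do rewrite ev_sum mulr_suml.
rewrite exchange_big /=; apply: eq_big_seq => t Ht.
have tL : t.2 \in L by apply: sub; apply: map_f.
rewrite (bigD1_seq t.2) //= eqxx mulr1 big1 ?addr0 // => w /negPf Hw.
by rewrite eq_sym Hw mulr0 mul0r.
Qed.

Lemma sum_ev_eq (p q : fsum K) (H : word -> K) : ev p =1 ev q ->
  \sum_(t <- p) t.1 * H t.2 = \sum_(t <- q) t.1 * H t.2.
Proof.
move=> E.
rewrite (@sum_ev p H (undup (map snd p ++ map snd q))) ?undup_uniq //; last first.
  by move=> w Hw; rewrite mem_undup mem_cat Hw.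
rewrite (@sum_ev q H (undup (map snd p ++ map snd q))) ?undup_uniq //; last first.
  by move=> w Hw; rewrite mem_undup mem_cat Hw orbT.
by apply: eq_bigr => w _; rewrite E.
Qed.

Lemma sum_ev0 (p : fsum K) (H : word -> K) :
  (forall w, ev p w != 0 -> H w = 0) -> \sum_(t <- p) t.1 * H t.2 = 0.
Proof.
move=> HH; rewrite (@sum_ev p H (undup (map snd p))) ?undup_uniq //; last first.
  by move=> w; rewrite mem_undup.
rewrite big1 // => w _; have [->|/HH ->] := eqVneq (ev p w) 0.
  by rewrite mul0r.
by rewrite mulr0.
Qed.

Lemma sum_fmul (p q : fsum K) (F : K * word -> K) :
  \sum_(t <- fmul p q) F t = \sum_(a <- p) \sum_(b <- q) F (a.1 * b.1, a.2 ++ b.2).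
Proof. by rewrite /fmul big_allpairs_dep. Qed.

Lemma phi_gen n' u z v : inA (100 * n') u -> inZ1 z ->
  phi (fmul (fmul u z) v) = 0.
Proof.
move=> Hu Hz.
rewrite phi_sum sum_fmul sum_fmul /=.
set H2 := fun x s => \sum_(c <- v) c.1 * chi (x ++ s ++ c.2).
set H1 := fun x => \sum_(b <- z) b.1 * H2 x b.2.
transitivity (\sum_(a <- u) a.1 * H1 a.2).
  apply: eq_bigr => a _; rewrite /H1 mulr_sumr; apply: eq_bigr => b _.
  rewrite /H2 !mulr_sumr; apply: eq_bigr => c _.
  by rewrite -catA !mulrA.
apply: sum_ev0 => x /Hu Hx.
rewrite /H1.
case: Hz => [[k [s [Hs [Hq E]]]] | [k [s1 [s2 [l1 [l2 [Hs1 [Hs2 [_ [E1 [E2 [E3 [E4 [Eq E]]]]]]]]]]]]]].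
  rewrite (sum_ev_eq _ E) big_cons big_nil addr0 /=.
  rewrite /H2 big1 ?mulr0 // => c _.
  by rewrite (@chi_type1 x s c.2 n' Hx Hs Hq) mulr0.
rewrite (sum_ev_eq _ E) big_cons big_cons big_nil addr0 /=.
rewrite -mulrDr /H2 -big_split /= big1 ?mulr0 // => c _.
rewrite -mulrDr (@chi_type2 x s1 s2 c.2 n' Hx Hs1) ?mulr0 //.
apply: swap_s1s2 => //; by rewrite ?E1 ?E2 ?E3 ?E4.
Qed.

Lemma phi_B1 a : inB1 a -> phi a = 0.
Proof.
case=> l [Hl E]; rewrite (phi_ev E) phi_flatten big_map big1_seq // => t /andP[_ Ht].
by case: (Hl t Ht) => Hu Hz; apply: phi_gen Hu Hz.
Qed.

End F.


Fixpoint Gn (z : nat) (w : word) : nat :=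
  match w with [::] => z | a :: w' => Gn (z.+1 - a) w' end.

Lemma G_cat z u v : G z (u ++ v) = (G z u * G (Gn z u) v)%N.
Proof. by elim: u z => [|a u IH] z /=; rewrite ?mul1n // IH mulnA. Qed.

Lemma Gn_cat z u v : Gn z (u ++ v) = Gn (Gn z u) v.
Proof. by elim: u z => [|a u IH] z //=. Qed.

Lemma G_nseq z k : G z (nseq k 0%N) = 1%N.
Proof. by elim: k z => [|k IH] z //=; rewrite IH bin0. Qed.

Lemma Gn_nseq z k : Gn z (nseq k 0%N) = (z + k)%N.
Proof. by elim: k z => [|k IH] z //=; rewrite ?addn0 // IH subn0 addnS. Qed.

Lemma Gn_blk e b z : (e <= 1)%N -> Gn z (blk99 e b) = (z + 98 - e)%N.
Proof.
rewrite /blk99 Gn_cat Gn_nseq.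
by case: e => [|[|e]] // _; case: b => /=; lia.
Qed.

Lemma G_blk e b z : G z (blk99 e b) =
  G z (if b then [:: 1; e; 0] else [:: 0; e; 1])%N.
Proof. by rewrite /blk99 G_cat G_nseq muln1. Qed.

Lemma sumn_Wj e bs : sumn (Wj e bs) = ((1 + e) * size bs)%N.
Proof.
elim: bs => [|b bs IH]; first by rewrite muln0.
rewrite Wj_cons sumn_cat /blk99 sumn_cat.
have -> : sumn (nseq 96 0%N) = 0%N by [].
case: bs IH => [|b' bs] IH; first by case: b => /=; lia.
move: IH; set W := Wj e (b' :: bs); move=> IH.
have -> : sumn (0%N :: W) = sumn W by rewrite /= add0n.
rewrite IH; case: b => /=; lia.
Qed.

Lemma G_cons0 z w : G z (0%N :: w) = G z.+1 w.
Proof. by rewrite /= bin0 mul1n subn0. Qed.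

Section E.
Variable K : fieldType.

Lemma sgn_cons b bs : sgn K (b :: bs) = (if b then -1 else 1) * sgn K bs.
Proof. by rewrite /sgn big_cons. Qed.

Definition dd (e z : nat) : K := (G z (blk99 e false))%:R - (G z (blk99 e true))%:R.

Lemma S_eq e (c : K) : (e <= 1)%N -> (forall z, dd e z = c) ->
  forall n z, \sum_(bs <- allbs n.+1) sgn K bs * (G z (Wj e bs))%:R = c ^+ n.+1.
Proof.
move=> He Hd; elim=> [|n IH] z.
  rewrite [allbs _]/= !big_cons big_nil addr0 /sgn !big_cons !big_nil.
  have W : forall b, Wj e [:: b] = blk99 e b ++ [::] by [].
  by rewrite !W !cats0 -(Hd z) /dd !mulr1 mul1r mulN1r expr1.
have -> : allbs n.+2 = map (cons false) (allbs n.+1) ++ map (cons true) (allbs n.+1)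
  by [].
rewrite big_cat !big_map.
have E : forall b bs, bs \in allbs n.+1 ->
   sgn K (b :: bs) * (G z (Wj e (b :: bs)))%:R =
   (if b then -1 else 1) * (G z (blk99 e b))%:R *
   (sgn K bs * (G (z + 99 - e) (Wj e bs))%:R).
  move=> b bs; rewrite mem_allbs; case: bs => [|b' bs] // _.
  rewrite Wj_cons; set W := Wj e (b' :: bs).
  rewrite G_cat Gn_blk // G_cons0 sgn_cons natrM.
  rewrite (_ : ((z + 98 - e).+1 = z + 99 - e)%N); last by lia.
  by ring.
rewrite (eq_big_seq _ (E false)) (eq_big_seq _ (E true)).
rewrite -!mulr_sumr !IH exprS -(Hd z) /dd.
have -> : (if false then -1 else 1) = (1 : K) by [].
have -> : (if true then -1 else 1) = (-1 : K) by [].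
set A := (G z (blk99 e false))%:R; set B := (G z (blk99 e true))%:R.
rewrite /= !exprS; ring.
Qed.

Lemma notB1 e (c : K) h : (e <= 1)%N -> (0 < h)%N -> c ^+ h != 0 ->
  (forall z, dd e z = c) ->
  ~ inB1 (coefA K (100 * h - 1) ((100 * h - 1) - (1 + e) * h)).
Proof.
move=> He Hh Hc Hd /(phi_B1 e h) H.
move: Hc; rewrite -H /phi.
case: h Hh {H} => [//|h] _.
rewrite -(S_eq He Hd h 0); apply/negP; rewrite negbK; apply/eqP.
apply: eq_big_seq => bs; rewrite mem_allbs => /eqP Hs.
rewrite coefG; last by lia.
rewrite size_Wj sumn_Wj Hs (_ : (100 * h.+1).-1 = 100 * h.+1 - 1)%N; last by lia.
rewrite eqxx /= (_ : (100 * h.+1 - 1 - (1 + e) * h.+1 + (1 + e) * h.+1 ==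
   100 * h.+1 - 1)%N); last first.
  have HX : ((1 + e) * h.+1 <= 2 * h.+1)%N by rewrite leq_mul2r; lia.
  move: HX; set X := ((1 + e) * h.+1)%N => HX; apply/eqP; lia.
by rewrite mul1r.
Qed.

End E.


Lemma dd0 (K : fieldType) z : dd K 0 z = 2.
Proof.
rewrite /dd !G_blk /= !bin0 !subn0 !bin1 !muln1 !mul1n.
by rewrite -addn2 natrD addrAC subrr add0r.
Qed.

Lemma dd1 (K : fieldType) z : (2%:R : K) = 0 -> dd K 1 z = 1.
move=> H2.
rewrite /dd !G_blk /= !bin0 !subn0 !bin1 !muln1 !mul1n subn1 /=.
rewrite !natrM -addn1 natrD.
have -> : (z%:R + 1) * (z%:R + 1) - z%:R * z%:R = 2%:R * z%:R + 1 :> K by ring.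
by rewrite H2 mul0r add0r.





Qed.

Lemma maxP (P : nat -> Prop) N j0 : P j0 -> (forall j, (N <= j)%N -> ~ P j) ->
  exists i, (j0 <= i)%N /\ P i /\ forall j, (i < j)%N -> ~ P j.
Proof.
move=> Pj0 HN.
have : (N - j0 <= N - j0)%N by [].
move: {2}(N - j0)%N => k.
elim: k j0 Pj0 => [|k IH] j0 Pj0 Hk.
  by exfalso; apply: (HN j0) => //; lia.
case: (classic (exists j, (j0 < j)%N /\ P j)) => [[j [Hj Pj]]|Hn].
  have HjN : (j < N)%N by case: (ltnP j N) => // /HN.
  have [i [Hi [Pi Hmax]]] := IH j Pj ltac:(lia).
  by exists i; split => //; lia.
exists j0; split => //; split => // j Hj Pj; apply: Hn; by exists j.
Qed.

Theorem mainTheorem6 (K : fieldType) (h : nat) (hpos : (0 < h)%N) :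
  let m := (100 * h - 1)%N in
  exists i : nat,
    (3 * (m + 1) < 4 * i)%N /\
    ~ inB1 (coefA K m i) /\
    (forall j : nat, (i < j)%N -> inB1 (coefA K m j)).
Proof.
move=> m.
have [j0 [Hj0 Pj0]] : exists j, (3 * (m + 1) < 4 * j)%N /\ ~ inB1 (coefA K m j).
  have [H2|H2] := eqVneq (2%:R : K) 0.
    exists (m - (1 + 1) * h)%N; split; first by rewrite /m; lia.
    apply: (@notB1 K 1 1 h) => //; first by rewrite expr1n oner_neq0.
    by move=> z; apply: dd1.
  exists (m - (1 + 0) * h)%N; split; first by rewrite /m; lia.
  apply: (@notB1 K 0 2 h) => //; first by rewrite expf_neq0.
  by move=> z; apply: dd0.
have HN : forall j, (size (x0Xpow K m) <= j)%N -> ~ ~ inB1 (coefA K m j).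
  move=> j Hj; apply; exists [::]; split => // w.
  by rewrite /coefA nth_default.
have [i [Hi [Pi Hmax]]] := maxP Pj0 HN.
exists i; split; first lia.
split => // j Hj; exact: NNPP (Hmax j Hj).
Qed.
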